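(* Both forgetfulness and absent-mindedness can prevent the existence of a Nash equilibrium in behavioural policies. Precisely: (i) there exists a (generalised) MAID in which some agent is forgetful and no agent is absent-minded, and which has no Nash equilibrium in behavioural policies; (ii) there exists a (generalised) MAID in which some agent is absent-minded and no agent is forgetful, and which has no Nash equilibrium in behavioural policies.
   Context: A multi-agent influence diagram (MAID) consists of a finite set of agents $N=\{1,\dots,n\}$ and a directed acyclic graph (DAG) on a finite set of variables $\bm{V}$, partitioned into chance variables $\bm{X}$, decision variables $\bm{D}=\bigcup_{i\in N}\bm{D}^i$ and utility variables $\bm{U}=\bigcup_{i\in N}\bm{U}^i$ (the sets $\bm{D}^i$ are pairwise disjoint, as are the $\bm{U}^i$). Each variable $V$ has a finite domain $\mathrm{dom}(V)$ with at least two elements; $\mathrm{Pa}_V$ denotes its parents in the DAG and $\mathrm{pa}_V$ an instantiation of them. The MAID specifies for every non-decision variable $V$ a conditional probability distribution (CPD) $\Pr(V\mid \mathrm{Pa}_V)$; utility variables have deterministic CPDs, i.e. are real-valued functions of their parents. In a generalised MAID, each agent's decision set $\bm{D}^i$ is partitioned into groups; all decisions in one group have the same domain and their parent sets have the same joint domain, and they share one decision rule. A decision rule for a group $G$ is a CPD $\pi_G(D\mid \mathrm{Pa}_D)$ used at every $D\in G$, each such decision drawing independently from it; it is pure if all its probabilities are in $\{0,1\}$. A (behavioural) policy $\bm{\pi}^i$ of agent $i$ assigns a decision rule to each group of $\bm{D}^i$; a policy profile is $\bm{\pi}=(\bm{\pi}^1,\dots,\bm{\pi}^n)$ and $\bm{\pi}^{-i}$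 denotes the policies of the agents other than $i$. The profile induces the joint distribution $\Pr^{\bm\pi}(\bm v)=\prod_{V\in\bm V\setminus\bm D}\Pr(v\mid \mathrm{pa}_V)\prod_{D\in\bm D}\pi_{G(D)}(d\mid \mathrm{pa}_D)$, where $G(D)$ is the group of $D$, and agent $i$'s expected utility is $EU^i(\bm\pi)=\sum_{U\in\bm U^i}\sum_{u}\Pr^{\bm\pi}(U=u)\,u$. A profile $\bm\pi$ is a Nash equilibrium in behavioural policies if for every agent $i$ and every behavioural policy $\bm\varpi^i$, $EU^i(\bm\pi^{-i},\bm\pi^i)\ge EU^i(\bm\pi^{-i},\bm\varpi^i)$. Agent $i$ has imperfect recall if for every total ordering $D_1\prec\dots\prec D_m$ of $\bm D^i$ there are $j<k$ with $\mathrm{Pa}_{D_j}\cup\{D_j\}\not\subseteq \mathrm{Pa}_{D_k}$; agent $i$ is forgetful if such a pair $D_j,D_k$ have distinct decision rules (lie in different groups); agent $i$ is absent-minded if some group of its decisions contains more than one decision. *)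

(* Defs.v *)
From HB Require Import structures.
From mathcomp Require Import all_boot all_order all_algebra.
From mathcomp Require Import Rstruct.
From Stdlib Require Rdefinitions.
Notation R := Rdefinitions.R.
Set Implicit Arguments.
Unset Strict Implicit.
Unset Printing Implicit Defensive.
Import Order.TTheory GRing.Theory Num.Theory.
Local Open Scope ring_scope.

Inductive vkind (n : nat) : Type :=
| Chance
| Decision of 'I_n
| Utility of 'I_n.
Arguments Chance {n}.

(* A generalised MAID.
   - agents: 'I_nA;  variables: the finite type V;  DAG given by parent sets par;
   - dom v = 'I_(k v);  full instantiations of V are Asg = {dffun forall v, 'I_(k v)};
   - decision groups are indexed by 'I_ng; group G belongs to agent gag G, its decisions
     have domain 'I_(dk G), and the (common) joint domain of their parents is identified
     with 'I_(ok G) through the bijections obs v (v a decision of G);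
   - cpd v x d = Pr(V = d | pa_V), where pa_V is the restriction of x to par v;
   - for a utility variable U, its domain (a finite set of reals) is the image of the
     injective labelling uval U. *)
Record MAID := {
  nA : nat;
  V : finType;
  par : V -> {set V};
  kind : V -> vkind nA;
  k : V -> nat;
  ng : nat;
  grp : V -> 'I_ng;
  gag : 'I_ng -> 'I_nA;
  dk : 'I_ng -> nat;
  ok : 'I_ng -> nat;
  obs : forall v : V, {dffun forall u : V, 'I_(k u)} -> 'I_(ok (grp v));
  cpd : forall v : V, {dffun forall u : V, 'I_(k u)} -> 'I_(k v) -> R;
  uval : forall v : V, 'I_(k v) -> R
}.

Arguments obs {m} v x.
Arguments cpd {m} v x d.
Arguments uval {m} v d.

Definition Asg (M : MAID) := {dffun forall u : V M, 'I_(k u)}.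

Definition isDec (M : MAID) (i : 'I_(nA M)) (v : V M) : bool :=
  if kind v is Decision j then j == i else false.
Definition isDecAny (M : MAID) (v : V M) : bool :=
  if kind v is Decision _ then true else false.
Definition isUtil (M : MAID) (i : 'I_(nA M)) (v : V M) : bool :=
  if kind v is Utility j then j == i else false.

Definition edge (M : MAID) : rel (V M) := fun a b => a \in par b.

Definition agree_par (M : MAID) (v : V M) (x y : Asg M) : Prop :=
  forall u, u \in par v -> x u = y u.

Definition wf_MAID (M : MAID) : Prop :=
  (* the graph is acyclic: no edge u -> v closes a path v ~> u *)
  (forall u v : V M, u \in par v -> ~~ connect (@edge M) v u) /\
  (forall v : V M, (2 <= k v)%N) /\
  (forall v : V M, ~~ isDecAny v ->
     (forall x y, agree_par v x y -> cpd v x = cpd v y) /\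
     (forall x d, 0 <= cpd v x d) /\
     (forall x, \sum_(d : 'I_(k v)) cpd v x d = 1)) /\
  (forall v : V M, (if kind v is Utility _ then true else false) ->
     (forall x d, cpd v x d = 0 \/ cpd v x d = 1) /\ injective (uval v)) /\
  (forall G : 'I_(ng M), exists v, isDecAny v /\ grp v = G) /\
  (forall v : V M, forall i, isDec i v ->
     gag (grp v) = i /\ k v = dk (grp v) /\
     (forall x y, agree_par v x y -> obs v x = obs v y) /\
     (forall x y, obs v x = obs v y -> agree_par v x y) /\
     (forall o, exists x, obs v x = o)).

Definition profile (M : MAID) :=
  forall G : 'I_(ng M), 'I_(ok G) -> 'I_(dk G) -> R.

Definition valid_rule (M : MAID) (G : 'I_(ng M)) (r : 'I_(ok G) -> 'I_(dk G) -> R) :=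
  (forall o d, 0 <= r o d) /\ (forall o, \sum_(d : 'I_(dk G)) r o d = 1).

Definition valid_policy (M : MAID) (i : 'I_(nA M)) (pi : profile M) : Prop :=
  forall G : 'I_(ng M), gag G = i -> valid_rule (pi G).

Definition valid_profile (M : MAID) (pi : profile M) : Prop :=
  forall G : 'I_(ng M), valid_rule (pi G).

Definition dec_prob (M : MAID) (pi : profile M) (v : V M) (x : Asg M) : R :=
  match (insub (nat_of_ord (x v)) : option 'I_(dk (grp v))) with
  | Some d => pi (grp v) (obs v x) d
  | None => 0
  end.

Definition factor (M : MAID) (pi : profile M) (v : V M) (x : Asg M) : R :=
  if isDecAny v then dec_prob pi v x else cpd v x (x v).

Definition joint (M : MAID) (pi : profile M) (x : Asg M) : R :=
  \prod_(v : V M) factor pi v x.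

Definition EU (M : MAID) (i : 'I_(nA M)) (pi : profile M) : R :=
  \sum_(U : V M | isUtil i U) \sum_(u : 'I_(k U))
     (\sum_(x : Asg M | x U == u) joint pi x) * uval U u.

Definition deviate (M : MAID) (pi : profile M) (i : 'I_(nA M)) (varpi : profile M)
  : profile M :=
  fun G => if gag G == i then varpi G else pi G.

Definition nash (M : MAID) (pi : profile M) : Prop :=
  valid_profile pi /\
  forall (i : 'I_(nA M)) (varpi : profile M), valid_policy i varpi ->
    EU i (deviate pi i varpi) <= EU i pi.

(* total orderings of D^i: duplicate-free enumerations of D^i *)
Definition ordering_of (M : MAID) (i : 'I_(nA M)) (s : seq (V M)) : Prop :=
  uniq s /\ forall v, (v \in s) = isDec i v.

Definition imperfect_recall (M : MAID) (i : 'I_(nA M)) : Prop :=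
  forall s, ordering_of i s ->
    exists a b, [/\ a \in s, b \in s, (index a s < index b s)%N &
                    ~~ ((a |: par a) \subset par b)].

Definition forgetful (M : MAID) (i : 'I_(nA M)) : Prop :=
  forall s, ordering_of i s ->
    exists a b, [/\ a \in s, b \in s, (index a s < index b s)%N,
                    ~~ ((a |: par a) \subset par b) & grp a != grp b].

Definition absent_minded (M : MAID) (i : 'I_(nA M)) : Prop :=
  exists v w, [/\ isDec i v, isDec i w, v != w & grp v = grp w].

(* Main.v *)
Require Import Defs.
From mathcomp Require Import all_boot all_order all_algebra.
From mathcomp Require Import Rstruct.
From mathcomp Require Import ring lra.
Set Implicit Arguments.
Unset Strict Implicit.
Unset Printing Implicit Defensive.
Import Order.TTheory GRing.Theory Num.Theory.
Local Open Scope ring_scope.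

Definition v0 : 'I_5 := @Ordinal 5 0 isT.
Definition v1 : 'I_5 := @Ordinal 5 1 isT.
Definition v2 : 'I_5 := @Ordinal 5 2 isT.
Definition v3 : 'I_5 := @Ordinal 5 3 isT.
Definition v4 : 'I_5 := @Ordinal 5 4 isT.
Definition i0 : 'I_2 := @Ordinal 2 0 isT.
Definition i1 : 'I_2 := @Ordinal 2 1 isT.

Definition par5 (v : 'I_5) : {set 'I_5} :=
  if (2 < val v)%N then [set v0; v1; v2] else set0.
Definition kind5 (v : 'I_5) : vkind 2 :=
  match val v with 0 | 1 => Decision i0 | 2 => Decision i1
  | 3 => Utility i0 | _ => Utility i1 end.
Definition A5 := {dffun forall u : 'I_5, 'I_2}.
Definition winb (x : A5) : bool :=
  (val (x v0) == val (x v1)) && (val (x v1) == val (x v2)).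
Definition cpd5 (v : 'I_5) (x : A5) (d : 'I_2) : R :=
  if val v == 3 then (if val d == winb x then 1 else 0)
  else if val v == 4 then (if val d == ~~ winb x then 1 else 0) else 0.

Definition mk (n : nat) (g : 'I_5 -> 'I_n) (ga : 'I_n -> 'I_2) : MAID :=
  {| nA := 2; V := 'I_5; par := par5; kind := kind5; k := fun _ => 2%N;
     ng := n; grp := g; gag := ga; dk := fun _ => 2%N; ok := fun _ => 1%N;
     obs := fun v x => ord0; cpd := cpd5; uval := fun v d => (val d)%:R |}.

Lemma key (a0 a1 b0 b1 c0 c1 : R) : 0 <= a0 -> 0 <= a1 -> 0 <= b0 -> 0 <= b1 -> 0 <= c0 -> 0 <= c1 ->
  a0 + a1 = 1 -> b0 + b1 = 1 -> c0 + c1 = 1 ->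
  c1 <= a1 * b1 * c1 + a0 * b0 * c0 ->
  c0 <= a1 * b1 * c1 + a0 * b0 * c0 ->
  a0 * b0 + a0 * b1 + a1 * b0 <= a0 * b0 * c1 + a0 * b1 * c0 + a0 * b1 * c1 + a1 * b0 * c0 + a1 * b0 * c1 + a1 * b1 * c0 ->
  a0 * b1 + a1 * b0 + a1 * b1 <= a0 * b0 * c1 + a0 * b1 * c0 + a0 * b1 * c1 + a1 * b0 * c0 + a1 * b0 * c1 + a1 * b1 * c0 ->
  False.
Proof.
move=> H1 H2 H3 H4 H5 H6 Ta Tb Tc E1 E2 E3 E4.
have Ea : a0 = 1 - a1 by lra.
have Eb : b0 = 1 - b1 by lra.
have Ec : c0 = 1 - c1 by lra.
subst a0 b0 c0.
have E1' : c1 <= a1 * b1 * c1 + (1 - a1) * (1 - b1) * (1 - c1) by [].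
have E2' : 1 - c1 <= a1 * b1 * c1 + (1 - a1) * (1 - b1) * (1 - c1) by [].
have Id : (1 - a1) * (1 - b1) * c1 + (1 - a1) * b1 * (1 - c1) + (1 - a1) * b1 * c1 + a1 * (1 - b1) * (1 - c1) + a1 * (1 - b1) * c1 + a1 * b1 * (1 - c1) = 1 - (a1 * b1 * c1 + (1 - a1) * (1 - b1) * (1 - c1)) by ring.
rewrite Id in E3 E4.
have I3 : (1 - a1) * (1 - b1) + (1 - a1) * b1 + a1 * (1 - b1) = 1 - a1 * b1 by ring.
have I4 : (1 - a1) * b1 + a1 * (1 - b1) + a1 * b1 = 1 - (1 - a1) * (1 - b1) by ring.
rewrite I3 in E3; rewrite I4 in E4.
move: E1' E2' E3 E4.
move: (a1 * b1 * c1 + (1 - a1) * (1 - b1) * (1 - c1)) => W E1' E2' E3 E4.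
have F1 : 1 <= 2 * (a1 * b1) by lra.
have F2 : 1 <= 2 * ((1 - a1) * (1 - b1)) by lra.
have G1 : 0 <= a1 * (1 - b1) by apply: mulr_ge0.
have G2 : 0 <= (1 - a1) * b1 by apply: mulr_ge0.
have Z1 : a1 * (1 - b1) = 0 by nra.
have Z2 : (1 - a1) * b1 = 0 by nra.
nra.
Qed.

Section S.
Variables (n : nat) (g : 'I_5 -> 'I_n) (ga : 'I_n -> 'I_2).
Let M := mk g ga.

Definition sel (a b c d e : 'I_2) (v : 'I_5) : 'I_2 :=
  match val v with 0 => a | 1 => b | 2 => c | 3 => d | _ => e end.
Definition mkX (a b c d e : 'I_2) : Asg M := finfun (fun v : 'I_5 => (sel a b c d e v : 'I_(@k M v))).

Lemma sum2 (F : 'I_2 -> R) : \sum_(i < 2) F i = F i0 + F i1.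
Proof.
rewrite !big_ord_recl big_ord0 addr0; congr (F _ + F _); exact: val_inj.
Qed.

Lemma sumAsg (F : Asg M -> R) : \sum_(x : Asg M) F x =
  \sum_(a < 2) \sum_(b < 2) \sum_(c < 2) \sum_(d < 2) \sum_(e < 2) F (mkX a b c d e).
Proof.
rewrite !pair_bigA.
pose h (p : 'I_2 * 'I_2 * 'I_2 * 'I_2 * 'I_2) := mkX p.1.1.1.1 p.1.1.1.2 p.1.1.2 p.1.2 p.2.
rewrite (reindex h) /=.
  by apply: eq_bigr => -[[[[a b] c] d] e].
exists (fun x : Asg M => ((x v0 : 'I_2), (x v1 : 'I_2), (x v2 : 'I_2), (x v3 : 'I_2), (x v4 : 'I_2))).
  by move=> [[[[a b] c] d] e] _; rewrite /h /mkX !ffunE.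
move=> x _; apply/ffunP => v; rewrite /h /mkX ffunE /sel /=.
by case: v => -[|[|[|[|[|m]]]]] Hm //=; congr (x _); apply: val_inj.
Qed.
Lemma prod5 (F : 'I_5 -> R) : \prod_(v < 5) F v = F v0 * F v1 * F v2 * F v3 * F v4.
Proof.
rewrite !big_ord_recl big_ord0 mulr1 !mulrA.
by congr (F _ * F _ * F _ * F _ * F _); apply: val_inj.
Qed.

Lemma joint_eq (pi : profile M) (x : Asg M) : joint pi x =
  pi (g v0) ord0 (x v0) * pi (g v1) ord0 (x v1) * pi (g v2) ord0 (x v2)
  * cpd5 v3 x (x v3) * cpd5 v4 x (x v4).
Proof.
rewrite /joint prod5 /factor /= /dec_prob /=.
by rewrite !valK.
Qed.
Lemma sum5 (F : 'I_5 -> R) : \sum_(v < 5) F v = F v0 + F v1 + F v2 + F v3 + F v4.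
Proof.
rewrite !big_ord_recl big_ord0 addr0 !addrA.
by congr (F _ + F _ + F _ + F _ + F _); apply: val_inj.
Qed.

Lemma EU0 (pi : profile M) : EU (M:=M) i0 pi =
  pi (g v0) ord0 i1 * pi (g v1) ord0 i1 * pi (g v2) ord0 i1 +
  pi (g v0) ord0 i0 * pi (g v1) ord0 i0 * pi (g v2) ord0 i0.
Proof.
rewrite /EU big_mkcond sum5 /isUtil /=.
rewrite !add0r addr0 sum2 /= mulr0 add0r mulr1.
rewrite big_mkcond sumAsg.
under eq_bigr do under eq_bigr do under eq_bigr do under eq_bigr do under eq_bigr do rewrite joint_eq.
rewrite !sum2 /mkX !ffunE /=.
rewrite /cpd5 /winb !ffunE /sel /= !(mulr0,mul0r,mulr1,addr0,add0r).
by rewrite addrC. Qed.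
Lemma EU1 (pi : profile M) : EU (M:=M) i1 pi =
  let r j d := pi (g j) ord0 d in
  r v0 i0 * r v1 i0 * r v2 i1 + r v0 i0 * r v1 i1 * r v2 i0 + r v0 i0 * r v1 i1 * r v2 i1 +
  r v0 i1 * r v1 i0 * r v2 i0 + r v0 i1 * r v1 i0 * r v2 i1 + r v0 i1 * r v1 i1 * r v2 i0.
Proof.
rewrite /EU big_mkcond sum5 /isUtil /=.
rewrite !add0r sum2 /= mulr0 add0r mulr1.
rewrite big_mkcond sumAsg.
under eq_bigr do under eq_bigr do under eq_bigr do under eq_bigr do under eq_bigr do rewrite joint_eq.
rewrite !sum2 /mkX !ffunE.
rewrite /cpd5 /winb !ffunE /sel /= !(mulr0,mul0r,mulr1,addr0,add0r).
ring.
Qed.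
Lemma I5P (v : 'I_5) : v = v0 \/ v = v1 \/ v = v2 \/ v = v3 \/ v = v4.
Proof.
case: v => -[|[|[|[|[|m]]]]] Hv //.
- by left; apply: val_inj.
- by right; left; apply: val_inj.
- by right; right; left; apply: val_inj.
- by right; right; right; left; apply: val_inj.
- by right; right; right; right; apply: val_inj.
Qed.

Lemma I2P (d : 'I_2) : d = i0 \/ d = i1.
Proof. case: d => -[|[|m]] Hd //; [left|right]; exact: val_inj. Qed.

Lemma par_sub (u v : 'I_5) : u \in par5 v -> (val u < 3)%N /\ (2 < val v)%N.
Proof.
rewrite /par5; case: ifP => H; last by rewrite inE.
by move=> Hu; split => //; case: (I5P u) Hu => [->|[->|[->|[->|->]]]] //; rewrite !inE.
Qed.

Hypothesis H5 : forall G : 'I_n, exists v, (val v < 3)%N /\ g v = G.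
Hypothesis H6 : [/\ ga (g v0) = i0, ga (g v1) = i0 & ga (g v2) = i1].

Lemma wfM : wf_MAID M.
Proof.
have [Ha Hb Hc] := H6.
split.
  move=> u v /= Huv; apply/negP => /connectP [p Hp Hu].
  case: p Hp Hu => [|y p] /=.
    by move=> _ Hu; subst u; have [] := par_sub Huv; case: (val v) => [|[|[|]]].
  move=> /andP [Hvy _] _; have [] := par_sub Hvy; have [] := par_sub Huv.
  by case: (val v) => [|[|[|]]].
split; first by [].
split.
  move=> v; case: (I5P v) => [->|[->|[->|[->|->]]]] //= _.
  - split.
      move=> x y Hxy; rewrite /cpd5 /winb /=.
      rewrite !Hxy //= /par5 /= !inE eqxx ?orbT //.
    split; first by move=> x d; rewrite /cpd5 /=; case: ifP.
    move=> x; rewrite sum2 /cpd5 /=; case: (winb x) => /=; rewrite ?addr0 ?add0r //.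
  - split.
      move=> x y Hxy; rewrite /cpd5 /winb /=.
      rewrite !Hxy //= /par5 /= !inE eqxx ?orbT //.
    split; first by move=> x d; rewrite /cpd5 /=; case: ifP.
    move=> x; rewrite sum2 /cpd5 /=; case: (winb x) => /=; rewrite ?addr0 ?add0r //.
split.
  move=> v; case: (I5P v) => [->|[->|[->|[->|->]]]] //= _.
  - split; first by move=> x d; rewrite /cpd5 /=; case: ifP; auto.
    by move=> a b /= /eqP; rewrite eqr_nat => /eqP; apply: val_inj.
  - split; first by move=> x d; rewrite /cpd5 /=; case: ifP; auto.
    by move=> a b /= /eqP; rewrite eqr_nat => /eqP; apply: val_inj.
split.
  move=> G; have [v [Hv <-]] := H5 G; exists v; split => //.
  by case: (I5P v) Hv => [->|[->|[->|[->|->]]]].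
move=> v i; case: (I5P v) => [->|[->|[->|[->|->]]]] //= /eqP <-; (split; [by [] | split; [by [] | split; [by [] | split]]]);
  try (by move=> x y _ u; rewrite /par5 /= inE);
  by move=> o; exists (mkX i0 i0 i0 i0 i0); apply: val_inj; case: o => -[|m] Hm.
Qed.
Definition ch (j : nat) : profile M := fun G o d => if val d == j then 1 else 0.

Lemma ch_valid j i : (j < 2)%N -> valid_policy i (ch j).
Proof.
move=> Hj G _; split; first by move=> o d; rewrite /ch; case: ifP.
move=> o; rewrite sum2 /ch /=.
by case: j Hj => [|[|]] //= _; rewrite ?addr0 ?add0r.
Qed.

Lemma noNE : ~ exists pi : profile M, nash pi.
Proof.
have [Ha Hb Hc] := H6.
move=> [pi [Hval Hdev]].
have [P0 S0] := Hval (g v0); have [P1 S1] := Hval (g v1); have [P2 S2] := Hval (g v2).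
have := S0 ord0; have := S1 ord0; have := S2 ord0; rewrite !sum2 => T2 T1 T0.
have := P0 ord0 i0; have := P0 ord0 i1; have := P1 ord0 i0; have := P1 ord0 i1;
have := P2 ord0 i0; have := P2 ord0 i1 => N1 N2 N3 N4 N5 N6.
have E1 := Hdev i0 (ch 1) (@ch_valid 1 i0 isT).
have E2 := Hdev i0 (ch 0) (@ch_valid 0 i0 isT).
have E3 := Hdev i1 (ch 1) (@ch_valid 1 i1 isT).
have E4 := Hdev i1 (ch 0) (@ch_valid 0 i1 isT).
rewrite !EU0 /deviate /= Ha Hb Hc /ch /= in E1 E2.
rewrite !EU1 /deviate /= Ha Hb Hc /ch /= in E3 E4.
rewrite !(mulr0,mul0r,mulr1,mul1r,addr0,add0r) in E1 E2 E3 E4.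
exact: (key N6 N5 N4 N3 N2 N1 T0 T1 T2 E1 E2 E3 E4).
Qed.
End S.

Definition j0 : 'I_3 := @Ordinal 3 0 isT.
Definition j1 : 'I_3 := @Ordinal 3 1 isT.
Definition j2 : 'I_3 := @Ordinal 3 2 isT.
Definition g1 (v : 'I_5) : 'I_3 := match val v with 0 => j0 | 1 => j1 | _ => j2 end.
Definition ga1 (G : 'I_3) : 'I_2 := if val G == 2 then i1 else i0.
Definition g2 (v : 'I_5) : 'I_2 := match val v with 0 | 1 => i0 | _ => i1 end.
Definition ga2 (G : 'I_2) : 'I_2 := G.

Lemma H5_1 : forall G : 'I_3, exists v, (val v < 3)%N /\ g1 v = G.
Proof.
case=> -[|[|[|m]]] Hm //.
- by exists v0; split => //; apply: val_inj.
- by exists v1; split => //; apply: val_inj.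
- by exists v2; split => //; apply: val_inj.
Qed.

Lemma H5_2 : forall G : 'I_2, exists v, (val v < 3)%N /\ g2 v = G.
Proof.
case=> -[|[|m]] Hm //.
- by exists v0; split => //; apply: val_inj.
- by exists v2; split => //; apply: val_inj.
Qed.

Lemma H6_1 : [/\ ga1 (g1 v0) = i0, ga1 (g1 v1) = i0 & ga1 (g1 v2) = i1].
Proof. by []. Qed.
Lemma H6_2 : [/\ ga2 (g2 v0) = i0, ga2 (g2 v1) = i0 & ga2 (g2 v2) = i1].
Proof. by []. Qed.

Theorem proposition1 :
  (exists M : MAID, [/\ wf_MAID M, (exists i : 'I_(nA M), forgetful i),
                       (forall i : 'I_(nA M), ~ absent_minded i) &
                       ~ (exists pi : profile M, nash pi)]) /\
  (exists M : MAID, [/\ wf_MAID M, (exists i : 'I_(nA M), absent_minded i),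
                       (forall i : 'I_(nA M), ~ forgetful i) &
                       ~ (exists pi : profile M, nash pi)]).
Proof.
split.
- exists (mk g1 ga1); split.
  + exact: (wfM H5_1 H6_1).
  + exists i0 => s [Hu Hs].
    have A0 : v0 \in s by rewrite Hs.
    have A1 : v1 \in s by rewrite Hs.
    have Hne : index v0 s != index v1 s.
      apply/negP => /eqP E.
      have := nth_index v0 A0; rewrite E nth_index //.
    have Hp : forall a b : 'I_5, (b == v0) || (b == v1) -> ~~ ((a |: par5 a) \subset par5 b).
      move=> a b /orP [] /eqP -> ; apply/negP => /subsetP /(_ a (setU11 a _)); by rewrite /par5 /= inE.
    case: (ltngtP (index v0 s) (index v1 s)) => H.
    * by exists v0, v1; split => //; apply: Hp; rewrite eqxx orbT.
    * by exists v1, v0; split => //; apply: Hp; rewrite eqxx.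
    * by rewrite H eqxx in Hne.
  + move=> i [v [w [Hv Hw Hvw Hg]]]; move: Hv Hw Hvw Hg.
    case: (I5P v) => [->|[->|[->|[->|->]]]]; case: (I5P w) => [->|[->|[->|[->|->]]]] //=.
  + exact: (noNE H6_1).
- exists (mk g2 ga2); split.
  + exact: (wfM H5_2 H6_2).
  + by exists i0, v0, v1.
  + move=> i; case: (I2P i) => -> Hf.
    * have [|a [b [Ha Hb Hab _ Hg]]] := Hf [:: v0; v1].
        split => // v; case: (I5P v) => [->|[->|[->|[->|->]]]] //.
      move: Ha Hb Hg; rewrite !inE => /orP [] /eqP -> /orP [] /eqP ->; by [].
    * have [|a [b [Ha Hb Hab _ Hg]]] := Hf [:: v2].
        split => // v; case: (I5P v) => [->|[->|[->|[->|->]]]] //.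
      move: Ha Hb Hab; rewrite !inE => /eqP -> /eqP ->; by rewrite ltnn.
  + exact: (noNE H6_2).
Qed.
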